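(* Let $p>2$ be a prime, $N\ge2$ an integer with $p\nmid N+1$, and $m\in\{1,2\}$. Then in $\mathbb{Z}_{(p)}[X]$ \[ \mathbb{HD}^{mp-1}_{N+1}(X)\equiv(-(N+1))^{mp-1}\sum_{i=0}^{\left[\frac{mp-1}{N+1}\right]}\frac{\big(1-mpH_{i(N+1)}\big)\prod_{j=1}^N\{\tfrac{j}{N+1}\}_i}{(i!)^N}X^{i(N+1)}\pmod{p^2}. \]
   Context: $\mathbb{HD}^P_M(X)=\sum_{i=0}^{[P/M]}c_i(-M)^{P-iM}X^{iM}$ with $c_i=\binom{P}{i}\binom{P-i}{i}\cdots\binom{P-(M-1)i}{i}$ (the Hasse--Dwork polynomial, printed as $(-M)^P(1+M!\sum_{i\ge1}\binom{P}{M\times i}(X/(-M))^{iM})$ with $M!\binom{P}{M\times i}=c_i$). $\{a\}_i=a(a+1)\cdots(a+i-1)$ for $i\ge1$ and $\{a\}_0=1$; $H_k=1+\frac12+\cdots+\frac1k$. For $i(N+1)\ge p$ one writes $pH_{i(N+1)}=1+p(H_{i(N+1)}-\frac1p)$, so all coefficients lie in $\mathbb{Z}_{(p)}$. *)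

(* Defs.v *)
(* Polynomials over rat; Z_(p) realized as a predicate on rat. *)
From mathcomp Require Import all_boot all_order all_algebra.
Set Implicit Arguments. Unset Strict Implicit. Unset Printing Implicit Defensive.
Import Order.TTheory GRing.Theory Num.Theory.
Local Open Scope ring_scope.

Definition hd_coef (P M i : nat) : nat :=
  (\prod_(k < M) 'C(P - k * i, i))%N.

Definition HD (P M : nat) : {poly rat} :=
  \sum_(i < (P %/ M).+1)
     ((- (M%:R : rat)) ^+ (P - i * M) * (hd_coef P M i)%:R) *: 'X^(i * M).

Definition poch (a : rat) (i : nat) : rat := \prod_(k < i) (a + k%:R).

Definition harm (k : nat) : rat := \sum_(1 <= j < k.+1) (j%:R)^-1.

Definition HD_rhs (p N m : nat) : {poly rat} :=
  (- ((N.+1)%:R : rat)) ^+ (m * p - 1) *: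
  \sum_(i < ((m * p - 1) %/ N.+1).+1)
     (((1 - (m * p)%:R * harm (i * N.+1)) *
        \prod_(1 <= j < N.+1) poch (j%:R / (N.+1)%:R) i)
       / (i`! %:R) ^+ N) *: 'X^(i * N.+1).

Definition in_p2Zp (p : nat) (q : rat) : Prop :=
  exists (a : int) (b : nat), ~~ (p %| b)%N /\ q = (((p ^ 2)%N)%:Z * a)%:~R / b%:R.

Definition poly_cong_p2 (p : nat) (P Q : {poly rat}) : Prop :=
  forall k : nat, in_p2Zp p ((P - Q)`_k).

(* Main.v *)
Require Import Defs.
From mathcomp Require Import all_boot all_order all_algebra.
From mathcomp Require Import ring lra zify.
Set Warnings "-all".
Import Order.TTheory GRing.Theory Num.Theory.
Local Open Scope ring_scope.

Lemma in_p2Zp0 p : prime p -> in_p2Zp p 0.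
Proof.
move=> pp; exists 0, 1%N; split; last by rewrite mulr0 mul0r.
by rewrite dvdn1; case: eqP pp => // ->.
Qed.

Lemma in_p2ZpD p x y : prime p -> in_p2Zp p x -> in_p2Zp p y -> in_p2Zp p (x + y).
Proof.
move=> pp [a [b [hb ->]]] [c [d [hd ->]]].
exists (a * d%:Z + c * b%:Z), (b * d)%N; split.
  by rewrite Euclid_dvdM // negb_or hb hd.
have b0 : (b%:R : rat) != 0 by rewrite pnatr_eq0; apply: contra hb => /eqP ->.
have d0 : (d%:R : rat) != 0 by rewrite pnatr_eq0; apply: contra hd => /eqP ->.
rewrite !rmorphM !rmorphD !rmorphM /= -!pmulrn.
field. by rewrite b0 d0.
Qed.

Lemma fact_notdvd p i : prime p -> (i < p)%N -> ~~ (p %| i`!)%N.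
Proof.
move=> pp; elim: i => [|i IH] hi; first by rewrite dvdn1; case: eqP pp => // ->.
rewrite factS Euclid_dvdM // negb_or IH ?andbT; last by lia.
apply/negP => /dvdn_leq; lia.
Qed.

Lemma natzr (n : nat) : ((n : int)%:~R : rat) = n%:R.
Proof. by []. Qed.

Lemma harmS n : harm n.+1 = harm n + (n.+1%:R)^-1.
Proof. by rewrite /harm big_nat_recr. Qed.

Lemma key_aux (c : nat) n : exists g z : int,
  g%:~R = n`!%:R * harm n /\
  \prod_(k < n) (c%:R - 1 - k%:R : rat) =
    (-1)^+n * (n`!%:R - c%:R * g%:~R + c%:R^+2 * z%:~R).
Proof.
elim: n => [|n [g [z [hg hp]]]].
  exists 0, 0; split; first by rewrite /harm big_geq // mulr0.
  by rewrite big_ord0 expr0 mul1r !mulr0 subr0 addr0.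
exists (n.+1%:Z * g + n`!%:Z), (g + z * (n.+1%:Z - c%:Z)); split.
  rewrite harmS rmorphD rmorphM /= hg -!pmulrn factS natrM.
  have : (n.+1%:R : rat) != 0 by rewrite pnatr_eq0.
  move=> h. field. by rewrite -mulrS pnatr_eq0.
rewrite factS natrM (big_ord_recr n) hp [(-1)^+n.+1]exprS !rmorphD !rmorphM rmorphB /= !natzr.
rewrite !mulrS. ring.
Qed.

Lemma hd_fact (P i k : nat) : (k * i <= P)%N ->
  ((\prod_(k' < k) 'C(P - k' * i, i)) * (i`! ^ k * (P - k * i)`!))%N = P`!.
Proof.
elim: k => [|k IH] h; first by rewrite big_ord0 mul0n subn0 expn0 !mul1n.
have h1 : (k * i <= P)%N by lia.
have h2 : (i <= P - k * i)%N by lia.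
rewrite big_ord_recr /= -(IH h1) -(bin_fact h2).
have -> : (P - k.+1 * i = P - k * i - i)%N by lia.
rewrite expnS. ring.
Qed.

Lemma ffact_rat (P n : nat) : (n <= P)%N ->
  (P`!%:R : rat) = (P - n)`!%:R * \prod_(k < n) ((P.+1)%:R - 1 - k%:R).
Proof.
move=> h; rewrite -(ffact_fact h) ffact_prod natrM mulrC natr_prod.
congr (_ * _); apply: eq_bigr => k _.
rewrite natrB; last by have := ltn_ord k; lia.
by rewrite mulrS addrC addrK.
Qed.

Lemma fact_add (a b : nat) : (a + b)`! = (a`! * \prod_(j < b) (a + j.+1))%N.
Proof.
elim: b => [|b IH]; first by rewrite big_ord0 addn0 muln1.
by rewrite big_ord_recr /= addnS factS IH; ring.
Qed.

Lemma prod_div (M : rat) N (f : nat -> rat) : M != 0 ->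
  \prod_(j < N) (f j / M) * M ^+ N = \prod_(j < N) f j.
Proof.
move=> hM; elim: N => [|N IH]; first by rewrite !big_ord0 mulr1.
rewrite !big_ord_recr /= -IH exprS; field; rewrite ?hM ?hM1 //.
Qed.

Lemma pochS a i : poch a i.+1 = poch a i * (a + i%:R).
Proof. by rewrite /poch big_ord_recr. Qed.

Lemma Q_fact N i :
  (\prod_(1 <= j < N.+1) poch (j%:R / N.+1%:R) i) * i`!%:R * (N.+1%:R)^+(i * N.+1)
  = (i * N.+1)`!%:R.
Proof.
have hM : (N.+1%:R : rat) != 0 by rewrite pnatr_eq0.
have hM1 : (1 + N%:R : rat) != 0 by rewrite -mulrS pnatr_eq0.
elim: i => [|i IH].
  by rewrite mul0n /poch (eq_bigr (fun _ => 1)) ?big1 // => *; rewrite big_ord0.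
rewrite (eq_bigr (fun j => poch (j%:R / N.+1%:R) i * (j%:R / N.+1%:R + i%:R)));
  last by move=> j _; rewrite pochS.
rewrite big_split /= mulSnr fact_add natrM -IH.
set A := \prod_(1 <= j < N.+1) poch _ i.
rewrite big_add1 /= big_mkord natr_prod [in RHS]big_ord_recr /=.
rewrite factS natrM exprD.
have -> : \prod_(j < N) ((j.+1)%:R / N.+1%:R + i%:R) =
          \prod_(j < N) ((i * N.+1 + j.+1)%:R / N.+1%:R) :> rat.
  apply: eq_bigr => j _; rewrite natrD natrM; field; rewrite ?hM ?hM1 //.
have := @prod_div _ N (fun j => (i * N.+1 + j.+1)%:R) hM => /= <-.
rewrite exprS !natrD !natrM !mulrS; ring.
Qed.

Lemma coef_main (p N m P i : nat) : prime p -> P.+1 = (m * p)%N ->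
  (i * N.+1 <= P)%N -> (i < p)%N ->
  in_p2Zp p ((- (N.+1%:R : rat)) ^+ (P - i * N.+1) * (hd_coef P N.+1 i)%:R -
    (- (N.+1%:R : rat)) ^+ P *
    (((1 - (P.+1)%:R * harm (i * N.+1)) *
        \prod_(1 <= j < N.+1) poch (j%:R / (N.+1)%:R) i) / (i`! %:R) ^+ N)).
Proof.
move=> pp hc hn hip.
set n := (i * N.+1)%N.
have hn' : (N.+1 * i <= P)%N by rewrite mulnC.
have h1 := @hd_fact P i N.+1 hn'; rewrite [(N.+1 * i)%N]mulnC -/n in h1.
have h2 := ffact_rat P n hn.
have [g [z [hg hz]]] := key_aux P.+1 n.
have h3 := Q_fact N i; rewrite -/n in h3.
have hf : (i`!%:R : rat) != 0 by rewrite pnatr_eq0 -lt0n fact_gt0.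
have hM : (N.+1%:R : rat) != 0 by rewrite pnatr_eq0.
have hPn : ((P - n)`!%:R : rat) != 0 by rewrite pnatr_eq0 -lt0n fact_gt0.
have hhd : ((hd_coef P N.+1 i)%:R : rat) * i`!%:R ^+ N.+1 = \prod_(k < n) ((P.+1)%:R - 1 - k%:R).
  apply: (mulIf hPn).
  by rewrite [RHS]mulrC -h2 -h1 /hd_coef !natrM natrX mulrA.
exists ((-1) ^+ (P - n) * (-1) ^+ n * ((N.+1 ^ (P - n) * m ^ 2)%N)%:Z * z), (i`! ^ N.+1)%N.
split; first by rewrite Euclid_dvdX // negb_and fact_notdvd.
have -> : (- (N.+1%:R : rat)) ^+ P = (- (N.+1%:R : rat)) ^+ (P - n) * ((-1) ^+ n * N.+1%:R ^+ n).
  by rewrite -exprNn -exprD subnK.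
rewrite exprNn.
move: hhd; rewrite hz => hhd.
have hQ : \prod_(1 <= j < N.+1) poch (j%:R / N.+1%:R) i = n`!%:R / (i`!%:R * N.+1%:R ^+ n).
  rewrite -h3; field; rewrite hf expf_neq0 //.
have hd' : ((hd_coef P N.+1 i)%:R : rat) = (-1) ^+ n * (n`!%:R - P.+1%:R * g%:~R + P.+1%:R ^+ 2 * z%:~R) / i`!%:R ^+ N.+1.
  by rewrite -hhd mulfK // expf_neq0.
rewrite hd' hQ hg !rmorphM /= !rmorphXn /= !rmorphN /= !natzr ?natrX ?natrM hc ?natrM expr1n !(exprS (i`!%:R)).
rewrite [(- (N.+1%:R : rat)) ^+ _]exprNn.
move: ((-1) ^+ (P - n)) ((-1) ^+ n) (N.+1%:R ^+ (P - n)) (harm n) (n`!%:R) => a b c d e.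
have hMn : (N.+1%:R : rat) ^+ n != 0 by rewrite expf_neq0.
have hfN : (i`!%:R : rat) ^+ N != 0 by rewrite expf_neq0.
move: (N.+1%:R ^+ n) hMn (i`!%:R ^+ N) hfN => x hx y hy.
field; by rewrite hx hy hf.
Qed.

Theorem proposition3p10 (p N m : nat) :
  prime p -> (2 < p)%N -> (2 <= N)%N -> ~~ (p %| N.+1)%N ->
  (m = 1%N \/ m = 2%N) ->
  poly_cong_p2 p (HD (m * p - 1) N.+1) (HD_rhs p N m).
Proof.
move=> pp p2 N2 _ hm k.
have hc : (m * p - 1).+1 = (m * p)%N by case: hm => ->; lia.
rewrite /HD /HD_rhs.
set P := (m * p - 1)%N.
rewrite scaler_sumr -sumrB coef_sum.
apply: (big_ind (in_p2Zp p)); first exact: in_p2Zp0 pp.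
  by move=> x y; apply: in_p2ZpD.
move=> i _.
rewrite scalerA -scalerBl coefZ coefXn.
case: eqP => _; last by rewrite mulr0; exact: in_p2Zp0.
rewrite mulr1.
have hi : (i * N.+1 <= P)%N by rewrite -leq_divRL // -ltnS.
have hmp : (m * p <= 2 * p)%N by case: hm => ->; lia.
have hip : (i < p)%N by move: hi; rewrite /P; nia.
have := @coef_main p N m P i pp hc hi hip.
by rewrite hc.
Qed.
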